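(* Fix $f\in\mathbb{N}$, $\ell=2f+1$. For a family of directed graphs $G=(V,E)$ with $n=|V|\to\infty$, each with a partition of $V$ into regions $R_1,\dots,R_k$, let $R=\max_{k'}|R_{k'}|$, $r=\min_{k'}|R_{k'}|$, and consider the region-based Byzantine reinforcement $G'$, $P$, $A'$ (as defined in the context). Let $F'\subseteq V'$ contain each node independently with probability $p=p(n)$ (Byzantine faults), and assume $Rp\in o(1)$. (a) If $p\in o\big((n/r)^{-1/(f+1)}/R\big)$, the reinforcement is valid under $\mathrm{Byz}(p)$: with probability $1-o(1)$, for every region $R_{k'}$ there are at least $f+1$ indices $i\in[\ell]$ with $\{v_i:v\in R_{k'}\}\cap F'=\emptyset$, and hence $A'$ simulates $A$. (b) If $G$ contains $\Omega(n)$ nodes with non-zero outdegree, $R\in O(1)$, and $p\in\omega(n^{-1/(f+1)})$, then with probability $1-o(1)$ some node with non-zero outdegree has more than $f$ faulty copies, and the reinforcement is not valid.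
   Context: Region-based Byzantine reinforcement: $V'=V\times[\ell]$, $v_i=(v,i)$, $P(v_i)=v$, $E'=\bigcup_{e\in E}E'_e$ with, for $e=(v,w)\in E$, $E'_e=\{(v_i,w_i):i\in[\ell]\}$ if $v,w$ are in the same region and $E'_e=\{(v_i,w_j):i,j\in[\ell]\}$ otherwise. In $A'$, each non-faulty $v'$ keeps a copy of the state of $P(v')$ under $A$, sends on each $(v',w')\in E'$ the message $P(v')$ would send on $(P(v'),P(w'))$, and updates its state as if $P(v')$ received from each in-neighbor $w$ the majority message among those sent to $v'$ by the copies $w'$ of $w$ with $(w',v')\in E'$. Synchronous network model with scheduling algorithm $A$ (each round: send messages on outgoing links based on state, update state from received messages and input). $\mathrm{Byz}(p)$: each node of $V'$ independently faulty with probability $p$, faulty nodes behaving arbitrarily. Simulation under $\mathrm{Byz}(p)$: for each $v\in V$ a strict majority of its copies compute in every round the state of $v$ in the fault-free execution of $A$ (non-faulty copies getting the same input as $v$). Valid: $A'$ simulates $A$ with probability $1-o(1)$ as $n\to\infty$ ($f$ fixed). *)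

(* Defs.v *)
From Stdlib Require Import Reals ClassicalEpsilon.
From mathcomp Require Import all_boot.
Set Implicit Arguments. Unset Strict Implicit. Unset Printing Implicit Defensive.

Definition ell (f : nat) : nat := (2 * f).+1.

Section Reinforcement.
Variables (V : finType) (E : rel V) (P : {set {set V}}) (f : nat).

Definition same_region (v w : V) : bool := pblock P v == pblock P w.

Definition E' (x y : V * 'I_(ell f)) : bool :=
  E x.1 y.1 && (if same_region x.1 y.1 then x.2 == y.2 else true).

Definition maxreg : nat := \max_(B in P) #|B|.
Definition minreg : nat := \big[minn/#|V|]_(B in P) #|B|.

Section Algorithm.
(* A synchronous algorithm A on G: states S, inputs I, messages M.
   send v w s : message sent on edge (v,w) when v is in state s.
   upd v s rcv i : new state of v from old state s, received messages
   (rcv w = Some m if w is an in-neighbour that sent m, None if no edge)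
   and input i. *)
Variables (S I : Type) (M : eqType) (init : V -> S) (send : V -> V -> S -> M)
  (upd : V -> S -> (V -> option M) -> I -> S).

Fixpoint run (inp : nat -> V -> I) (t : nat) : V -> S :=
  match t with
  | 0 => init
  | t'.+1 => fun v => upd v (run inp t' v)
      (fun w => if E w v then Some (send w v (run inp t' w)) else None) (inp t' v)
  end.

(* majority of a list of messages (strict majority if it exists,
   otherwise the tie-breaking default dflt) *)
Definition majority (dflt : M) (s : seq M) : M :=
  nth dflt s (find (fun m => size s < 2 * count_mem m s) s).

(* execution of A' with faulty set F, adversary adv (adv t y x = message
   sent by faulty y to x in round t), tie-break dflt, inputs inp.
   (The computed value of faulty nodes is irrelevant.) *)
Fixpoint run' (F : {set V * 'I_(ell f)})
  (adv : nat -> V * 'I_(ell f) -> V * 'I_(ell f) -> M) (dflt : M)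
  (inp : nat -> V -> I) (t : nat) : V * 'I_(ell f) -> S :=
  match t with
  | 0 => fun x => init x.1
  | t'.+1 => fun x =>
      let st := run' F adv dflt inp t' in
      let msg y := if y \in F then adv t' y x else send y.1 x.1 (st y) in
      upd x.1 (st x)
        (fun w => if E w x.1 then
           Some (majority dflt [seq msg y | y <- enum [set y | (y.1 == w) && E' y x]])
         else None)
        (inp t' x.1)
  end.

Definition simulates (F : {set V * 'I_(ell f)}) (dflt : M) : Prop :=
  forall (inp : nat -> V -> I) (adv : nat -> V * 'I_(ell f) -> V * 'I_(ell f) -> M),
  forall v : V, exists C : {set 'I_(ell f)}, (ell f < 2 * #|C|)%N /\
    forall i, i \in C -> (v, i) \notin F /\
      forall t, run' F adv dflt inp t (v, i) = run inp t v.

End Algorithm.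
End Reinforcement.

Definition Pr (T : finType) (p : R) (A : {set T} -> Prop) : R :=
  \big[Rplus/R0]_(F : {set T})
     (if excluded_middle_informative (A F)
      then Rmult (pow p #|F|) (pow (Rminus R1 p) (#|T| - #|F|)) else R0).

Definition valid (V : nat -> finType) (E : forall k, rel (V k))
  (P : forall k, {set {set V k}}) (f : nat) (p : nat -> R) : Prop :=
  forall (S I : nat -> Type) (M : nat -> eqType)
    (init : forall k, V k -> S k) (send : forall k, V k -> V k -> S k -> M k)
    (upd : forall k, V k -> S k -> (V k -> option (M k)) -> I k -> S k)
    (dflt : forall k, M k),
  Un_cv (fun k => Pr (p k) (fun F : {set V k * 'I_(ell f)} =>
     simulates (E k) (P k) (init k) (send k) (upd k) F (dflt k))) R1.

(* Main.v *)
From HB Require Import structures.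
Require Import Defs.
From Stdlib Require Import Reals Lra Lia ClassicalEpsilon FunctionalExtensionality.
From mathcomp Require Import all_boot zify.

Set Implicit Arguments.
Local Open Scope R_scope.

HB.instance Definition _ := Monoid.isComLaw.Build R R0 Rplus (fun a b c => esym (Rplus_assoc a b c)) Rplus_comm Rplus_0_l.
HB.instance Definition _ := Monoid.isComLaw.Build R R1 Rmult (fun a b c => esym (Rmult_assoc a b c)) Rmult_comm Rmult_1_l.
HB.instance Definition _ := Monoid.isMulLaw.Build R R0 Rmult Rmult_0_l Rmult_0_r.
HB.instance Definition _ := Monoid.isAddLaw.Build R Rmult Rplus Rmult_plus_distr_r Rmult_plus_distr_l.

Lemma prod_const (T : finType) (A : {pred T}) (c : R) :
  \big[Rmult/R1]_(x in A) c = c ^ #|A|.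
Proof.
rewrite big_const; elim: #|A| => //= n ->; by [].
Qed.

Section Prob.
Variables (T : finType) (p : R).
Hypothesis hp : 0 <= p <= 1.

Definition wt (F : {set T}) := pow p #|F| * pow (R1 - p) (#|T| - #|F|).

Lemma wt_prod F : wt F = \big[Rmult/R1]_(x : T) (if x \in F then p else R1 - p).
Proof.
rewrite (bigID (mem F)) /=.
rewrite [X in X * _](eq_bigr (fun _ => p)); last by move=> x ->.
rewrite [X in _ * X](eq_bigr (fun _ => R1 - p)); last by move=> x Hx; rewrite (negbTE Hx).
rewrite !prod_const /wt; congr (_ * pow _ _).
have := cardC (mem F); rewrite /=; move=> <-; by rewrite addKn.
Qed.

Lemma sum_prod (h : T -> bool -> R) :
  \big[Rplus/R0]_(F : {set T}) \big[Rmult/R1]_(x : T) h x (x \in F)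
  = \big[Rmult/R1]_(x : T) (h x true + h x false).
Proof.
rewrite (bigA_distr _ _ (fun x => h x true) (fun x => h x false)).
apply: (@eq_big R R0 Rplus) => [F|F _]; first by rewrite inE.
apply: (@eq_big R R1 Rmult) => // x _; by case: (x \in F).
Qed.

Lemma wt_ge0 F : 0 <= wt F.
Proof. rewrite /wt; apply: Rmult_le_pos; apply: pow_le; lra. Qed.

Definition Ex (g : {set T} -> R) := \big[Rplus/R0]_(F : {set T}) (wt F * g F).

Definition indb (b : bool) : R := if b then R1 else R0.

Lemma Ex_sub (D : {set T}) : Ex (fun F => indb (D \subset F)) = p ^ #|D|.
Proof.
rewrite /Ex.
pose h := fun x (b : bool) => if x \in D then (if b then p else R0) else (if b then p else R1 - p).
transitivity (\big[Rplus/R0]_(F : {set T}) \big[Rmult/R1]_(x : T) h x (x \in F)).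
  apply: eq_bigr => F _; rewrite wt_prod /indb.
  case: (boolP (D \subset F)) => HD.
    rewrite Rmult_1_r; apply: eq_bigr => x _ /=.
    rewrite /h; case: (boolP (x \in D)) => xD //; by rewrite (subsetP HD x xD).
  rewrite Rmult_0_r; have [x xD xF] : exists2 x, x \in D & x \notin F.
    by apply/exists_inP; move: HD; rewrite subset_disjoint disjoint_sym
       => /pred0Pn [x /andP [a b]]; apply/exists_inP; exists x; rewrite // inE.
  rewrite (bigD1 x) //= /h xD (negbTE xF) Rmult_0_l //.
rewrite (sum_prod h) /h.
rewrite (eq_bigr (fun x => if x \in D then p else R1)); last first.
  by move=> x _; case: (x \in D); lra.
rewrite (bigID (mem D)) /= [X in _ * X]big1; last by move=> x Hx; rewrite (negbTE Hx).
rewrite [X in X * _](eq_bigr (fun _ => p)); last by move=> x ->.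
by rewrite prod_const Rmult_1_r.
Qed.

Lemma Ex_1 : Ex (fun _ => R1) = R1.
Proof.
transitivity (p ^ #|(set0 : {set T})|); last by rewrite cards0.
rewrite -Ex_sub; apply: eq_bigr => F _; by rewrite sub0set.
Qed.

Lemma Ex_le g h : (forall F, g F <= h F) -> Ex g <= Ex h.
Proof.
move=> H; rewrite /Ex; apply: (big_ind2 Rle) => //.
  by move=> *; apply: Rle_refl.
  by move=> *; apply: Rplus_le_compat.
by move=> F _; apply: Rmult_le_compat_l; [apply: wt_ge0|apply: H].
Qed.

Lemma Ex_add g h : Ex (fun F => g F + h F) = Ex g + Ex h.
Proof.
rewrite /Ex -big_split /=; apply: eq_bigr => F _; lra.
Qed.

Lemma Ex_scale c g : Ex (fun F => c * g F) = c * Ex g.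
Proof.
rewrite /Ex big_distrr /=; apply: eq_bigr => F _; lra.
Qed.

Lemma Ex_sum (I : finType) (Q : pred I) (g : I -> {set T} -> R) :
  Ex (fun F => \big[Rplus/R0]_(i | Q i) g i F) = \big[Rplus/R0]_(i | Q i) Ex (g i).
Proof.
rewrite /Ex (eq_bigr (fun F => \big[Rplus/R0]_(i | Q i) (wt F * g i F))); last first.
  by move=> F _; rewrite big_distrr.
by rewrite exchange_big.
Qed.

Definition indP (A : {set T} -> Prop) (F : {set T}) : R :=
  if excluded_middle_informative (A F) then R1 else R0.

Lemma Pr_Ex (A : {set T} -> Prop) : Pr p A = Ex (indP A).
Proof.
rewrite /Pr /Ex; apply: eq_bigr => F _; rewrite /indP /wt.
case: (excluded_middle_informative (A F)) => HA /=; lra.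
Qed.

Lemma Pr_le (A B : {set T} -> Prop) : (forall F, A F -> B F) -> Pr p A <= Pr p B.
Proof.
move=> H; rewrite !Pr_Ex; apply: Ex_le => F; rewrite /indP.
case: (excluded_middle_informative (A F)) => HA;
  case: (excluded_middle_informative (B F)) => HB /=; try lra.
by case: HB; apply: H.
Qed.

Lemma Pr_le1 (A : {set T} -> Prop) : Pr p A <= 1.
Proof.
rewrite Pr_Ex; apply: (Rle_trans _ (Ex (fun _ => R1))); last by rewrite Ex_1; right.
apply: Ex_le => F; rewrite /indP.
case: (excluded_middle_informative (A F)) => HA /=; lra.
Qed.

Lemma Pr_compl (A : {set T} -> Prop) : Pr p A = 1 - Pr p (fun F => ~ A F).
Proof.
rewrite !Pr_Ex; have H2 := Ex_add (indP A) (indP (fun F => ~ A F)).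
have H1 := Ex_1.
have H3 : Ex (fun F => indP A F + indP (fun F0 : {set T} => ~ A F0) F) = Ex (fun _ => R1).
  apply: eq_bigr => F _; rewrite /indP.
  case: (excluded_middle_informative (A F)) => HA;
  case: (excluded_middle_informative (~ A F)) => HB /=; try lra; tauto.
lra.
Qed.
End Prob.

Unset Implicit Arguments.
Local Close Scope R_scope.

Lemma count2_le (M : eqType) (s : seq M) a b : a != b ->
  (count_mem a s + count_mem b s <= size s)%N.
Proof.
move=> ab; rewrite -count_predUI.
rewrite (@eq_count _ (predI _ _) pred0); last first.
  by move=> x /=; case: (eqVneq x a) => // ->; rewrite (negbTE ab).
by rewrite count_pred0 addn0 count_size.
Qed.

Lemma majority_eq (M : eqType) dflt (s : seq M) m :
  (size s < 2 * count_mem m s)%N -> majority dflt s = m.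
Proof.
move=> H; rewrite /majority.
set pr := fun m' => (size s < 2 * count_mem m' s)%N.
have hs : has pr s.
  apply/hasP; exists m => //; rewrite -has_pred1 has_count.
  by move: H; case: (count_mem m s) => //; rewrite muln0.
have := nth_find dflt hs; rewrite /pr.
set m' := nth dflt s _ => H'.
apply/eqP; apply: contraT => ne.
have := @count2_le _ s _ _ ne; move: H H'; lia.
Qed.

Lemma count_enum_sub (T : finType) (Y Z : {set T}) : Z \subset Y ->
  count (mem Z) (enum Y) = #|Z|.
Proof.
move=> ZY; rewrite -size_filter.
have /card_uniqP <- : uniq (filter (mem Z) (enum Y)) by apply/filter_uniq/enum_uniq.
apply: eq_card => x; rewrite mem_filter mem_enum /=.
by case: (boolP (x \in Z)) => // /(subsetP ZY) ->.
Qed.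

Section Sim.
Variables (V : finType) (E : rel V) (P : {set {set V}}) (f : nat).
Variables (S I : Type) (M : eqType) (init : V -> S) (send : V -> V -> S -> M)
  (upd : V -> S -> (V -> option M) -> I -> S).
Variables (F : {set V * 'I_(ell f)}) (dflt : M).
Hypothesis hP : partition P [set: V].
Hypothesis hgood : forall B, B \in P ->
  (f < #|[set i : 'I_(ell f) | [forall v in B, (v, i) \notin F]]|)%N.

Definition G (v : V) := [set i : 'I_(ell f) | [forall u in pblock P v, (u, i) \notin F]].

Lemma cov v : v \in cover P.
Proof. by case/and3P: hP => /eqP -> _ _; rewrite inE. Qed.

Lemma G_big v : (f < #|G v|)%N.
Proof. exact/hgood/pblock_mem/cov. Qed.

Lemma G_nf v i : i \in G v -> (v, i) \notin F.
Proof.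
rewrite inE => /forall_inP; apply; by rewrite mem_pblock cov.
Qed.

Lemma G_same w v : same_region P w v -> G w = G v.
Proof. by rewrite /same_region /G => /eqP ->. Qed.

Lemma sim_run inp adv t : forall v i, i \in G v ->
  run' E P init send upd F adv dflt inp t (v, i) = run E init send upd inp t v.
Proof.
elim: t => [//|t IH] v i iG /=.
rewrite IH //; congr (upd _ _ _ _).
apply: functional_extensionality => w.
case Ewv: (E w v) => //; congr Some.
set Y := [set y | _].
set msg := fun y => if y \in F then _ else _.
set m0 := send w v (run E init send upd inp t w).
apply: majority_eq.
set Z := [set y in Y | y.2 \in G w].
have msgZ : forall y, y \in Z -> msg y = m0.
  move=> [u j]; rewrite inE => /andP [yY jG]; move: yY; rewrite inE /= => /andP [/eqP Hu _].
  rewrite Hu /= in jG *.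
  by rewrite /msg (negbTE (G_nf _ _ jG)) IH.
have ZY : Z \subset Y by apply/subsetP => y; rewrite inE => /andP [].
have cnt : (#|Z| <= count_mem m0 [seq msg y | y <- enum Y])%N.
  rewrite count_map -(@count_enum_sub _ _ _ ZY); apply: sub_count => y /= yZ.
  by rewrite (msgZ y yZ).
rewrite size_map -cardE.
apply: (leq_trans _ (leq_mul (leqnn 2) cnt)).
case sr: (same_region P w v).
  have -> : Y = [set (w, i)].
    apply/setP => [[u j]]; rewrite !inE /E' /= xpair_eqE.
    case: (eqVneq u w) => [->|] //=; by rewrite Ewv sr.
  rewrite cards1; have : (w, i) \in Z.
    rewrite inE /= (G_same _ _ sr) iG andbT inE /E' /= eqxx Ewv sr eqxx //.
  move=> wZ; have : (0 < #|Z|)%N by rewrite card_gt0; apply/set0Pn; exists (w, i).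
  lia.
have hY : (#|Y| <= ell f)%N.
  have : Y \subset (fun j => (w, j)) @: [set: 'I_(ell f)].
    apply/subsetP => [[u j]]; rewrite !inE /= => /andP [/eqP -> _].
    by apply: imset_f; rewrite inE.
  move/subset_leq_card; move/leq_trans; apply; apply: leq_trans (leq_imset_card _ _) _.
  by rewrite cardsT card_ord.
have hZ : (#|G w| <= #|Z|)%N.
  rewrite -(card_imset _ (fun a b (h : (w, a) = (w, b)) => f_equal snd h)).
  apply: subset_leq_card; apply/subsetP => y /imsetP [j jG ->].
  by rewrite inE /= jG andbT inE /E' /= eqxx Ewv sr.
have := G_big w; move: hY hZ; rewrite /ell; lia.
Qed.

Lemma good_sim : simulates E P init send upd F dflt.
Proof.
move=> inp adv v; exists (G v); split.
  apply: (@leq_trans (2 * f.+1)); first by rewrite /ell mulnS.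
  exact: leq_mul (leqnn 2) (G_big v).
move=> i iG; split; first exact: G_nf _ _ iG.
by move=> t; apply: sim_run.
Qed.
End Sim.

Set Implicit Arguments.
Local Open Scope R_scope.

Lemma sum_const_R (I : finType) (Q : pred I) c :
  \big[Rplus/R0]_(i | Q i) c = INR #|Q| * c.
Proof.
rewrite big_const; elim: #|Q| => [|n IH]; first by rewrite /=; lra.
rewrite iterS IH S_INR; lra.
Qed.

Lemma sum_ge0 (I : finType) (Q : pred I) (g : I -> R) :
  (forall i, Q i -> 0 <= g i) -> 0 <= \big[Rplus/R0]_(i | Q i) g i.
Proof.
move=> H; apply: (big_ind (fun x => 0 <= x)) => //; first lra.
by move=> *; lra.
Qed.

Lemma sum_le (I : finType) (Q : pred I) (g h : I -> R) :
  (forall i, Q i -> g i <= h i) ->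
  \big[Rplus/R0]_(i | Q i) g i <= \big[Rplus/R0]_(i | Q i) h i.
Proof.
move=> H; apply: (big_ind2 Rle) => //; first lra.
by move=> *; apply: Rplus_le_compat.
Qed.

Lemma sum_ge_term (I : finType) (Q : pred I) (g : I -> R) j :
  Q j -> (forall i, Q i -> 0 <= g i) -> g j <= \big[Rplus/R0]_(i | Q i) g i.
Proof.
move=> Qj H; rewrite (bigD1 j) //=.
have : 0 <= \big[Rplus/R0]_(i | Q i && (i != j)) g i.
  by apply: sum_ge0 => i /andP [/H].
lra.
Qed.

Lemma pow_mono_nat m n k : (m <= n)%N -> (m ^ k <= n ^ k)%N.
Proof.
move=> H; elim: k => [|k IH]; first by [].
by rewrite !expnS; apply: leq_mul.
Qed.

Lemma bin_le_pow n k : ('C(n, k) <= n ^ k)%N.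
Proof.
elim: n k => [|n IH] [|k] //.
rewrite binS.
apply: leq_trans (leq_add (IH k.+1) (IH k)) _.
rewrite [(n ^ k.+1)%N]expnS [(n.+1 ^ k.+1)%N]expnS mulSn addnC.
apply: leq_add; first exact: (@pow_mono_nat n n.+1 k (leqnSn n)).
exact: leq_mul (leqnn n) (@pow_mono_nat n n.+1 k (leqnSn n)).
Qed.

Lemma natpowE m n : Nat.pow m n = (m ^ n)%N.
Proof. elim: n => // n IH; by rewrite expnS -IH. Qed.

Section PartA.
Variables (V : finType) (P : {set {set V}}) (f : nat) (p : R).
Hypothesis hp : 0 <= p <= 1.
Hypothesis hP : partition P [set: V].

Definition goodF (F : {set V * 'I_(ell f)}) := forall B, B \in P ->
  (f < #|[set i : 'I_(ell f) | [forall v in B, (v, i) \notin F]]|)%N.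

Definition draws (B : {set V}) :=
  [set D : {set V * 'I_(ell f)} | D \subset setX B [set: 'I_(ell f)] & #|D| == f.+1].

Lemma notgood_ex F : ~ goodF F -> exists2 D, [exists B in P, D \in draws B] & D \subset F.
Proof.
move=> ng.
have [B BP hB] : exists2 B, B \in P &
   (#|[set i : 'I_(ell f) | [forall v in B, (v, i) \notin F]]| <= f)%N.
  apply: NNPP => H; apply: ng => B BP; rewrite ltnNge; apply/negP => H'.
  by apply: H; exists B.
set Gd := [set i : 'I_(ell f) | _] in hB.
set D0 := F :&: setX B [set: 'I_(ell f)].
have hD0 : (f.+1 <= #|D0|)%N.
  have sub : ~: Gd \subset [set x.2 | x in D0].
    apply/subsetP => i; rewrite !inE => /forall_inPn [v vB /negPn vF].
    by apply/imsetP; exists (v, i) => //; rewrite !inE vF vB.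
  have := leq_trans (subset_leq_card sub) (leq_imset_card _ _).
  move=> h; have hc := cardsC Gd; rewrite card_ord /ell in hc.
  apply: leq_trans h; rewrite -(leq_add2l #|Gd|) hc.
  apply: leq_trans (leq_add hB (leqnn f.+1)) _.
  by rewrite addnS mul2n addnn.
have : (0 < #|[set D : {set V * 'I_(ell f)} | D \subset D0 & #|D| == f.+1]|)%N.
  by rewrite cards_draws bin_gt0.
rewrite card_gt0 => /set0Pn [D]; rewrite inE => /andP [DD0 cD].
exists D.
  apply/exists_inP; exists B => //; rewrite inE cD andbT.
  by apply: subset_trans DD0 _; apply: subsetIr.
by apply: subset_trans DD0 _; apply: subsetIl.
Qed.

Lemma indb_ge0 b : 0 <= indb b.
Proof. rewrite /indb; case: b; lra. Qed.

Lemma bad_bound : Pr p (fun F => ~ goodF F) <=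
   INR #|P| * (INR (maxreg P * ell f) * p) ^ f.+1.
Proof.
rewrite Pr_Ex //.
apply: (Rle_trans _ (Ex p (fun F => \big[Rplus/R0]_(B in P)
           \big[Rplus/R0]_(D in draws B) indb (D \subset F)))).
  apply: Ex_le => // F; rewrite /indP.
  case: (excluded_middle_informative (~ goodF F)) => H /=; last first.
    by apply: sum_ge0 => B _; apply: sum_ge0 => D _; apply: indb_ge0.
  have [D /exists_inP [B BP DB] DF] := @notgood_ex F H.
  have h1 := @sum_ge_term _ (fun B => B \in P)
     (fun B => \big[Rplus/R0]_(D in draws B) indb (D \subset F)) B BP.
  have h2 := @sum_ge_term _ (fun D => D \in draws B) (fun D => indb (D \subset F)) D DB.
  have h1' := h1 (fun B' _ => @sum_ge0 _ _ _ (fun D' _ => indb_ge0 _)).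
  have h2' := h2 (fun D' _ => indb_ge0 _).
  rewrite /indb DF in h2'.
  apply: Rle_trans h1'; apply: Rle_trans h2'; lra.
rewrite Ex_sum //.
rewrite (eq_bigr (fun B => INR #|draws B| * p ^ f.+1)); last first.
  move=> B _; rewrite Ex_sum // -sum_const_R; apply: eq_bigr => D.
  by rewrite Ex_sub // inE => /andP [_ /eqP ->].
rewrite -(@sum_const_R _ (mem P)).
apply: (@sum_le _ (mem P)) => B BP.
rewrite Rpow_mult_distr -pow_INR.
apply: Rmult_le_compat_r; first by apply: pow_le; lra.
apply: le_INR; apply/leP.
rewrite /draws cards_draws cardsX cardsT card_ord.
apply: leq_trans (bin_le_pow _ _) _.
rewrite natpowE; apply: pow_mono_nat; rewrite leq_mul2r; apply/orP; right.
exact: leq_bigmax_cond.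
Qed.
End PartA.


Lemma le_ell f : (f.+1 <= ell f)%N.
Proof. rewrite /ell ltnS; lia. Qed.

Section PartB.
Variables (V : finType) (E : rel V) (f : nat) (p : R).
Hypothesis hp : 0 <= p <= 1.

Definition W := [set v : V | [exists w, E v w]].
Definition Dv (v : V) : {set V * 'I_(ell f)} :=
  [set (v, widen_ord (le_ell f) i) | i : 'I_f.+1].

Lemma card_Dv v : #|Dv v| = f.+1.
Proof.
rewrite card_imset ?card_ord // => i j [] h; exact: val_inj h.
Qed.

Lemma Dv_disj v u : v != u -> [disjoint Dv v & Dv u].
Proof.
move=> vu; rewrite -setI_eq0; apply/eqP/setP => [[a b]]; rewrite !inE.
apply/negP => /andP [/imsetP [i _ [-> _]] /imsetP [j _ [e _]]].
by move: vu; rewrite e eqxx.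
Qed.

Definition badF (F : {set V * 'I_(ell f)}) :=
  exists v : V, (exists w, E v w) /\ (f < #|[set i : 'I_(ell f) | (v, i) \in F]|)%N.

Lemma Dv_bad (F : {set V * 'I_(ell f)}) v : v \in W -> Dv v \subset F -> badF F.
Proof.
rewrite inE => /existsP [w Evw] DF; exists v; split; first by exists w.
have : [set widen_ord (le_ell f) i | i : 'I_f.+1] \subset [set i : 'I_(ell f) | (v, i) \in F].
  apply/subsetP => j /imsetP [i _ ->]; rewrite inE; apply: (subsetP DF).
  by apply/imsetP; exists i.
move/subset_leq_card; apply: leq_trans.
by rewrite card_imset ?card_ord // => i j h; apply: val_inj; exact: (f_equal val h).
Qed.

Definition X (F : {set V * 'I_(ell f)}) := \big[Rplus/R0]_(v in W) indb (Dv v \subset F).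

Lemma EX : Ex p X = INR #|W| * p ^ f.+1.
Proof.
rewrite /X Ex_sum -(@sum_const_R _ (mem W)); apply: eq_bigr => v _.
by rewrite Ex_sub card_Dv.
Qed.

Lemma EX2 : Ex p (fun F => X F * X F) <= INR #|W| * p ^ f.+1 + (INR #|W| * p ^ f.+1) ^ 2.
Proof.
have -> : (fun F => X F * X F) = (fun F => \big[Rplus/R0]_(v in W)
      \big[Rplus/R0]_(u in W) indb (Dv v :|: Dv u \subset F)).
  apply: functional_extensionality => F; rewrite /X big_distrl /=.
  apply: eq_bigr => v _; rewrite big_distrr /=; apply: eq_bigr => u _.
  rewrite subUset /indb; case: (Dv v \subset F); case: (Dv u \subset F) => /=; lra.
rewrite Ex_sum.
apply: Rle_trans (_ : _ <= \big[Rplus/R0]_(v in W) (p ^ f.+1 + INR #|W| * p ^ (f.+1 + f.+1))) _.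
  apply: sum_le => v vW; rewrite Ex_sum.
  apply: Rle_trans (_ : _ <= \big[Rplus/R0]_(u in W)
       ((if u == v then p ^ f.+1 else 0) + p ^ (f.+1 + f.+1))) _.
    apply: sum_le => u uW; rewrite Ex_sub.
    case: (eqVneq u v) => [->|uv].
      rewrite setUid card_Dv; have := pow_le p (f.+1 + f.+1) (proj1 hp); lra.
    rewrite cardsU.
    have /eqP -> : Dv v :&: Dv u == set0 by rewrite setI_eq0 Dv_disj // eq_sym.
    rewrite cards0 subn0 !card_Dv; lra.
  rewrite big_split /= -(@sum_const_R _ (mem W)) (bigD1 v) //= eqxx big1; first lra.
  by move=> u /andP [_ /negbTE ->].
rewrite big_split /= !(@sum_const_R _ (mem W)) pow_add; apply: Req_le.
have cw : #|mem W| = #|W| by apply: eq_card.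
rewrite cw /=; ring.
Qed.

Lemma notbad_bound : 0 < INR #|W| * p ^ f.+1 ->
  Pr p (fun F => ~ badF F) <= / (INR #|W| * p ^ f.+1).
Proof.
set mu := INR #|W| * p ^ f.+1 => mu0.
pose h := fun F => / (mu * mu) * ((X F * X F + (- 2 * mu) * X F) + mu * mu * R1).
have hge : forall F, h F = / (mu * mu) * ((X F - mu) * (X F - mu)).
  by move=> F; rewrite /h; field; lra.
rewrite Pr_Ex.
apply: (Rle_trans _ (Ex p h)).
  apply: Ex_le => // F; rewrite /indP.
  case: (excluded_middle_informative (~ badF F)) => H /=.
    have X0 : X F = 0.
      rewrite /X big1 // => v vW; rewrite /indb.
      case: (boolP (Dv v \subset F)) => // DF; case: H; exact: Dv_bad vW DF.
    rewrite hge X0; apply: Req_le; field; lra.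
  rewrite hge; apply: Rmult_le_pos.
    by apply: Rlt_le; apply: Rinv_0_lt_compat; nra.
  by apply: Rle_0_sqr.
have e : Ex p h = / (mu * mu) *
   (Ex p (fun F => X F * X F) + (- 2 * mu) * Ex p X + mu * mu * Ex p (fun _ : {set V * 'I_(ell f)} => R1)).
  by rewrite /h Ex_scale Ex_add Ex_add !Ex_scale.
rewrite e Ex_1 // EX //.
have := EX2 => /= h2.
rewrite -/mu in h2 *.
have hinv : 0 < / (mu * mu) by apply: Rinv_0_lt_compat; nra.
apply: Rle_trans (_ : _ <= / (mu * mu) * mu) _.
  apply: Rmult_le_compat_l; first lra.
  simpl in h2; nra.
apply: Req_le; field; lra.
Qed.
End PartB.

Unset Implicit Arguments.

Lemma squeeze1 (u b : nat -> R) N :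
  (forall k, le N k -> 1 - b k <= u k <= 1) -> Un_cv b 0 -> Un_cv u 1.
Proof.
move=> H hb eps he; case: (hb eps he) => N1 HN1.
exists (Nat.max N N1) => k hk.
have h1 := H k ltac:(lia); have h2 := HN1 k ltac:(lia).
rewrite /R_dist in h2 *; rewrite Rminus_0_r in h2.
apply: Rabs_def1; have := Rabs_def2 _ _ h2; lra.
Qed.

Lemma cv_pow0 (a : nat -> R) m : Un_cv a 0 -> Un_cv (fun k => a k ^ (S m)) 0.
Proof.
move=> ha; elim: m => [|m IH].
  by apply: (Un_cv_ext a) => // k; rewrite /= Rmult_1_r.
have := CV_mult _ _ _ _ ha IH; rewrite Rmult_0_l.
by apply: Un_cv_ext => k.
Qed.

Lemma cv_scal0 (a : nat -> R) c : Un_cv a 0 -> Un_cv (fun k => c * a k) 0.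
Proof.
move=> ha; have hc : Un_cv (fun _ => c) c.
  by move=> e he; exists O => k _; rewrite /R_dist Rminus_diag Rabs_R0.
have := CV_mult (fun _ => c) a c 0 hc ha.
by rewrite Rmult_0_r.
Qed.

Lemma squeeze_inf (u v : nat -> R) N : cv_infty u ->
  (forall k, le N k -> 1 <= u k -> 1 - / u k <= v k) ->
  (forall k, v k <= 1) -> Un_cv v 1.
Proof.
move=> hu H hv eps he.
case: (hu (Rmax 1 (/ eps))) => N1 HN1.
exists (Nat.max N N1) => k hk.
have h1 := HN1 k ltac:(lia).
have m1 := Rmax_l 1 (/ eps); have m2 := Rmax_r 1 (/ eps).
have uk1 : 1 <= u k by lra.
have h2 := H k ltac:(lia) uk1.
have h3 := hv k.
have : / u k < eps.
  have uk0 : 0 < u k by lra.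
  rewrite -(Rinv_inv eps); apply: Rinv_lt_contravar; first by apply: Rmult_lt_0_compat => //; apply: Rinv_0_lt_compat.
  lra.
rewrite /R_dist => h4; apply: Rabs_def1; lra.
Qed.

Lemma no_two (a b : nat -> R) : Un_cv a 1 -> Un_cv b 1 ->
  (forall k, a k + b k <= 1) -> False.
Proof.
move=> ha hb H.
case: (ha (1/4) ltac:(lra)) => N1 H1; case: (hb (1/4) ltac:(lra)) => N2 H2.
have := H1 (Nat.max N1 N2) ltac:(lia); have := H2 (Nat.max N1 N2) ltac:(lia).
rewrite /R_dist => h2 h1; have := H (Nat.max N1 N2).
have := Rabs_def2 _ _ h1; have := Rabs_def2 _ _ h2; lra.
Qed.

Lemma rpow_inv_pow x m : 0 < x -> (Rpower x (/ (INR m + 1))) ^ (S m) = x.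
Proof.
move=> hx.
rewrite -Rpower_pow; last by apply: exp_pos.
rewrite Rpower_mult S_INR Rinv_l; last by have := pos_INR m; lra.
exact: Rpower_1.
Qed.

Set Implicit Arguments.

Lemma bigmin_le (I : eqType) (s : seq I) (Q : pred I) (g : I -> nat) x j :
  j \in s -> Q j -> (\big[minn/x]_(i <- s | Q i) g i <= g j)%N.
Proof.
elim: s => //= a s IH; rewrite inE big_cons; case/orP => [/eqP <-|js] Qj.
  by rewrite Qj geq_minl.
case: (Q a); last exact: IH.
by rewrite geq_min IH ?orbT.
Qed.

Section Regions.
Variables (V : finType) (P : {set {set V}}).
Hypothesis hP : partition P [set: V].
Hypothesis hV : (0 < #|V|)%N.

Lemma minreg_le B : B \in P -> (minreg P <= #|B|)%N.
Proof. move=> BP; rewrite /minreg; apply: bigmin_le => //; exact: mem_index_enum. Qed.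

Lemma minreg_gt0 : (0 < minreg P)%N.
Proof.
rewrite /minreg; apply: (big_ind (fun x => 0 < x)%N) => //.
  by move=> a b a0 b0; rewrite leq_min a0 b0.
move=> B BP; rewrite card_gt0; apply: contraTneq BP => ->.
by case/and3P: hP.
Qed.

Lemma maxreg_gt0 : (0 < maxreg P)%N.
Proof.
have : [set: V] != set0 by rewrite -card_gt0 cardsT.
case/set0Pn => v _.
have cv : v \in cover P by case/and3P: hP => /eqP -> _ _; rewrite inE.
apply: leq_trans (leq_bigmax_cond _ (pblock_mem cv)).
by rewrite card_gt0; apply/set0Pn; exists v; rewrite mem_pblock.
Qed.

Lemma cardP_min : (#|P| * minreg P <= #|V|)%N.
Proof.
rewrite -cardsT (card_partition hP) -sum_nat_const.
by apply: leq_sum => B BP; apply: minreg_le.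
Qed.
End Regions.

Lemma parta_k (V : finType) (P : {set {set V}}) f p : 0 <= p <= 1 ->
  partition P [set: V] -> (0 < #|V|)%N ->
  Pr p (fun F : {set V * 'I_(ell f)} => ~ goodF P F) <=
  INR (ell f) ^ f.+1 * (p / (Rpower (INR #|V| / INR (minreg P)) (- / (INR f + 1))
                              / INR (maxreg P))) ^ f.+1.
Proof.
move=> hp hP hV.
have hb := bad_bound P f hp.
apply: Rle_trans hb _.
set n := INR #|V|; set r := INR (minreg P); set Rm := INR (maxreg P); set L := INR (ell f).
have r0 : 0 < r by apply: lt_0_INR; apply/ltP; apply: minreg_gt0.
have R0' : 0 < Rm by apply: lt_0_INR; apply/ltP; apply: maxreg_gt0.
have n0 : 0 < n by apply: lt_0_INR; apply/ltP.
have nr0 : 0 < n / r by apply: Rdiv_lt_0_compat.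
set y := Rpower (n / r) (/ (INR f + 1)).
have y0 : 0 < y by apply: exp_pos.
have hy : y ^ f.+1 = n / r by apply: rpow_inv_pow.
rewrite Rpower_Ropp -/y.
have -> : p / (/ y / Rm) = L^0 * (p * y * Rm) by simpl; field; lra.
rewrite mult_INR -/Rm -/L !Rpow_mult_distr hy /=.
have hP' : INR #|P| <= n / r.
  have := cardP_min _ hP => /leP /le_INR; rewrite mult_INR -/r -/n => h.
  apply: (Rmult_le_reg_r r) => //; rewrite /Rdiv Rmult_assoc Rinv_l; lra.
have L0 : 0 <= L by apply: pos_INR.
have K0 : 0 <= Rm * Rm ^ f * (L * L ^ f) * (p * p ^ f).
  apply: Rmult_le_pos; [apply: Rmult_le_pos|]; (apply: Rmult_le_pos; [|apply: pow_le]); lra.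
rewrite pow1.
have e : L * L ^ f * (1 * 1 * (p * p ^ f * (n / r) * (Rm * Rm ^ f))) = n / r * (Rm * Rm ^ f * (L * L ^ f) * (p * p ^ f)) by ring.
rewrite e; exact: Rmult_le_compat_r.
Qed.

Lemma partb_k (V : finType) (E : rel V) f p c : 0 <= p <= 1 -> 0 < c ->
  (0 < #|V|)%N -> c * INR #|V| <= INR #|@W V E| ->
  1 <= p / Rpower (INR #|V|) (- / (INR f + 1)) ->
  1 - / (c * (p / Rpower (INR #|V|) (- / (INR f + 1)))) <=
  Pr p (fun F : {set V * 'I_(ell f)} => badF E F).
Proof.
move=> hp c0 hV hW.
set n := INR #|V|.
have n0 : 0 < n by apply: lt_0_INR; apply/ltP.
set y := Rpower n (/ (INR f + 1)).
have y0 : 0 < y by apply: exp_pos.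
have hy : y ^ f.+1 = n by apply: rpow_inv_pow.
rewrite Rpower_Ropp -/y.
set z := p / / y => z1.
have ez : z ^ f.+1 = p ^ f.+1 * n by rewrite /z /Rdiv Rinv_inv Rpow_mult_distr hy.
have zz : z <= z ^ f.+1.
  rewrite /= -[X in X <= _]Rmult_1_r; apply: Rmult_le_compat_l; first lra.
  exact: pow_R1_Rle.
have pf0 : 0 <= p ^ f.+1 by apply: pow_le; lra.
set mu := INR #|@W V E| * p ^ f.+1.
have hmu : c * z <= mu.
  apply: Rle_trans (_ : _ <= c * z ^ f.+1) _; first by apply: Rmult_le_compat_l; lra.
  rewrite ez /mu; have := Rmult_le_compat_r _ _ _ pf0 hW; rewrite -/n; nra.
have czpos : 0 < c * z by nra.
have mu0 : 0 < mu by lra.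
have hnb := notbad_bound V E hp mu0.
rewrite (@Pr_compl _ p hp (fun F : {set V * 'I_(ell f)} => badF E F)).
have : / mu <= / (c * z) by apply: Rinv_le_contravar.
rewrite -/mu in hnb; lra.
Qed.

Lemma sim_notbad (V : finType) (E : rel V) (P : {set {set V}}) f (S I : Type) (M : eqType)
  (init : V -> S) (send : V -> V -> S -> M) (upd : V -> S -> (V -> option M) -> I -> S)
  (F : {set V * 'I_(ell f)}) (dflt : M)
  (inp : nat -> V -> I) (adv : nat -> V * 'I_(ell f) -> V * 'I_(ell f) -> M) :
  simulates E P init send upd F dflt -> ~ badF E F.
Proof.
move=> hs [v [_ hv]]; have [C [hC hCi]] := hs inp adv v.
set Fv := [set i : 'I_(ell f) | (v, i) \in F] in hv.
have sub : C \subset ~: Fv.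
  by apply/subsetP => i iC; rewrite !inE; case: (hCi i iC).
have h1 := subset_leq_card sub.
have h2 : (#|Fv| + #|~: Fv| = ell f)%N by rewrite cardsC; exact: card_ord.
have h3 : (#|C| + #|Fv| <= ell f)%N.
  apply: (@leq_trans (#|~: Fv| + #|Fv|)); first by rewrite leq_add2r.
  by rewrite addnC h2.
move: hC h3 hv; rewrite /ell; lia.
Qed.

Unset Implicit Arguments.

Theorem theorem9 (f : nat) (V : nat -> finType) (E : forall k, rel (V k))
  (P : forall k, {set {set V k}}) (p : nat -> R) :
  cv_infty (fun k => INR #|V k|) ->
  (forall k, partition (P k) [set: V k]) ->
  (forall k, 0 <= p k <= 1) ->
  Un_cv (fun k => INR (maxreg (P k)) * p k) 0 ->
  ( Un_cv (fun k => p k / (Rpower (INR #|V k| / INR (minreg (P k)))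
                                  (- / (INR f + 1)) / INR (maxreg (P k)))) 0 ->
    Un_cv (fun k => Pr (p k) (fun F : {set V k * 'I_(ell f)} =>
        forall B, B \in P k ->
          (f < #|[set i : 'I_(ell f) | [forall v in B, (v, i) \notin F]]|)%N)) 1
    /\ valid E P f p )
  /\
  ( (exists c : R, 0 < c /\ exists N : nat, forall k, (N <= k)%N ->
        c * INR #|V k| <= INR #|[set v : V k | [exists w, E k v w]]|) ->
    (exists (C : R) (N : nat), forall k, (N <= k)%N -> INR (maxreg (P k)) <= C) ->
    cv_infty (fun k => p k / Rpower (INR #|V k|) (- / (INR f + 1))) ->
    Un_cv (fun k => Pr (p k) (fun F : {set V k * 'I_(ell f)} =>
        exists v : V k, (exists w, E k v w) /\
          (f < #|[set i : 'I_(ell f) | (v, i) \in F]|)%N)) 1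
    /\ ~ valid E P f p ).
Proof.
move=> hn hP hp _.
have [N0 HN0] := hn 0.
have hV : forall k, (N0 <= k)%coq_nat -> (0 < #|V k|)%N.
  move=> k hk; have := HN0 k hk => h; apply/ltP; apply: INR_lt; by rewrite /=.
split.
  move=> ha.
  set b := fun k => INR (ell f) ^ f.+1 *
     (p k / (Rpower (INR #|V k| / INR (minreg (P k))) (- / (INR f + 1))
        / INR (maxreg (P k)))) ^ f.+1.
  have hb : Un_cv b 0 by apply: cv_scal0; apply: cv_pow0.
  have key : forall k, (N0 <= k)%coq_nat ->
      1 - b k <= Pr (p k) (fun F : {set V k * 'I_(ell f)} => goodF (P k) F).
    move=> k hk; rewrite (Pr_compl (hp k)).
    have := parta_k (P k) f (hp k) (hP k) (hV k hk); rewrite /b; lra.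
  split.
    apply: (squeeze1 _ b N0) => // k hk; split; first exact: key.
    exact: Pr_le1.
  move=> S I M init send upd dflt.
  apply: (squeeze1 _ b N0) => // k hk; split; last exact: Pr_le1.
  apply: Rle_trans (key k hk) _; apply: Pr_le => // F hg.
  exact: good_sim (hP k) hg.
move=> [c [c0 [N1 hW]]] _ hz.
have [Nz HNz] := hz 1.
set z := fun k => p k / Rpower (INR #|V k|) (- / (INR f + 1)).
have hbad : Un_cv (fun k => Pr (p k) (fun F : {set V k * 'I_(ell f)} =>
        exists v : V k, (exists w, E k v w) /\
          (f < #|[set i : 'I_(ell f) | (v, i) \in F]|)%N)) 1.
  apply: (squeeze_inf (fun k => c * z k) _ (Nat.max (Nat.max N0 N1) Nz)).
  - move=> M; have [N HN] := hz (M / c); exists N => k hk.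
    have := HN k hk; rewrite -/(z k) => h.
    have : M = c * (M / c) by field; lra.
    nra.
  - move=> k hk _.
    have hk1 : (N1 <= k)%N by apply/leP; lia.
    apply: (partb_k (V k) (E k) f (hp k) c0 (hV k ltac:(lia)) (hW k hk1)).
    have := HNz k ltac:(lia); lra.
  - by move=> k; apply: Pr_le1.
split => // hv.
have := hv (fun _ => unit) (fun _ => unit) (fun _ => (bool : eqType))
   (fun _ _ => tt) (fun _ _ _ _ => true) (fun _ _ _ _ _ => tt) (fun _ => true).
move=> hsim; refine (no_two _ _ hsim hbad _) => k.
apply: (Rle_trans _ (Pr (p k) (fun F : {set V k * 'I_(ell f)} => ~ badF (E k) F)
                      + Pr (p k) (fun F : {set V k * 'I_(ell f)} => badF (E k) F))).
  apply: Rplus_le_compat_r; apply: Pr_le => // F hs.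
  exact: (sim_notbad (fun _ _ => tt) (fun _ _ _ => true) hs).
rewrite [X in _ + X](Pr_compl (hp k)); lra.
Qed.
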